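(* Let $\lambda>0$, let $\mathbf r_\lambda\in\mathfrak R$ be any point at which $f+\lambda g$ attains its minimum over $\mathfrak R$, and let $\mathbf r_\lambda(t)$, $t\ge0$, be the uniformly rotating trajectory generated by it (defined in the context). Then $f(\mathbf r_\lambda(t))=f_\lambda$ and $g(\mathbf r_\lambda(t))=g_\lambda$ are constant in $t$ and $$f_\lambda=\frac{C(\mathbf m)}{\sqrt{g_\lambda}}.$$
   Context: Fix $N\ge 2$, masses $\mathbf m=(m_1,\dots,m_N)$, $m_i>0$, and $\gamma>0$. Planar configuration space $\mathfrak R=\{\mathbf r=(\mathbf r_1,\dots,\mathbf r_N)\in(\mathbb R^2)^N:\ \mathbf r_i\neq\mathbf r_j \text{ for } i\neq j\}$; $f(\mathbf r)=\sum_{i<j}\frac{\gamma m_im_j}{|\mathbf r_j-\mathbf r_i|}$, $g(\mathbf r)=\sum_i m_i|\mathbf r_i|^2$. Let $C(\mathbf m)=\min\{f(\mathbf r):\mathbf r\in\mathfrak R,\ g(\mathbf r)=1\}$, so that $\min\{f(\mathbf r): g(\mathbf r)=g\}=C(\mathbf m)/\sqrt g$ for all $g>0$. For $\lambda>0$ and a minimizer $\mathbf r_\lambda=(\mathbf r_{1\lambda},\dots,\mathbf r_{N\lambda})$ of $f+\lambda g$ on $\mathfrak R$, writing $\mathbf r_{i\lambda}=|\mathbf r_{i\lambda}|(\cos\varphi_{i\lambda},\sin\varphi_{i\lambda})$ and $\omega=\sqrt{2\lambda}$, the generated trajectory is $\mathbf r_\lambda(t)=(\mathbf r_{1\lambda}(t),\dots,\mathbf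 r_{N\lambda}(t))$ with $\mathbf r_{i\lambda}(t)=|\mathbf r_{i\lambda}|(\cos(\varphi_{i\lambda}+\omega t),\sin(\varphi_{i\lambda}+\omega t))$; it solves $m_i\ddot{\mathbf r}_i=\sum_{j\ne i}\gamma m_im_j(\mathbf r_j-\mathbf r_i)/|\mathbf r_j-\mathbf r_i|^3$. *)

(* Defs.v *)
From mathcomp Require Import all_boot all_order all_algebra.
From mathcomp Require Import all_classical all_reals all_analysis.
Set Implicit Arguments. Unset Strict Implicit. Unset Printing Implicit Defensive.
Import Order.TTheory GRing.Theory Num.Theory.
Local Open Scope ring_scope.
Local Open Scope classical_set_scope.

Section Defs.
Variable R : realType.

Definition nrm2 (a : R * R) : R := Num.sqrt (a.1 ^+ 2 + a.2 ^+ 2).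
Definition dist2 (a b : R * R) : R := nrm2 (b.1 - a.1, b.2 - a.2).

Definition config (N : nat) (r : 'I_N -> R * R) : Prop :=
  forall i j : 'I_N, i != j -> r i <> r j.

Definition fpot (N : nat) (m : 'I_N -> R) (gamma : R) (r : 'I_N -> R * R) : R :=
  \sum_(i < N) \sum_(j < N | (i < j)%N) gamma * m i * m j / dist2 (r i) (r j).

Definition gmom (N : nat) (m : 'I_N -> R) (r : 'I_N -> R * R) : R :=
  \sum_(i < N) m i * nrm2 (r i) ^+ 2.

(* C(m) = min { f(r) : r in frak R, g(r) = 1 } (taken as the infimum) *)
Definition Cmin (N : nat) (m : 'I_N -> R) (gamma : R) : R :=
  inf [set fpot m gamma r | r in [set r | config r /\ gmom m r = 1]].

Definition traj (N : nat) (r : 'I_N -> R * R) (phi : 'I_N -> R) (omega t : R)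
  : 'I_N -> R * R :=
  fun i => (nrm2 (r i) * cos (phi i + omega * t), nrm2 (r i) * sin (phi i + omega * t)).

End Defs.

(* Main.v *)
Require Import Defs.
From mathcomp Require Import all_boot all_order all_algebra.
From mathcomp Require Import all_classical all_reals all_analysis.
From mathcomp Require Import ring lra.
Import Order.TTheory GRing.Theory Num.Theory.
Local Open Scope ring_scope.

Section Helpers.
Variable R : realType.

Lemma rot_sq (x y c s : R) : c ^+ 2 + s ^+ 2 = 1 ->
  (x * c - y * s) ^+ 2 + (x * s + y * c) ^+ 2 = x ^+ 2 + y ^+ 2.
Proof.
move=> h.
have -> : (x * c - y * s) ^+ 2 + (x * s + y * c) ^+ 2 =
  (x ^+ 2 + y ^+ 2) * (c ^+ 2 + s ^+ 2) by ring.
by rewrite h mulr1.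
Qed.

Definition rot (c s : R) (a : R * R) : R * R :=
  (a.1 * c - a.2 * s, a.1 * s + a.2 * c).

Lemma dist2_rot (c s : R) a b : c ^+ 2 + s ^+ 2 = 1 ->
  dist2 (rot c s a) (rot c s b) = dist2 a b.
Proof.
move=> h; rewrite /dist2 /nrm2 /rot /=.
have -> : b.1 * c - b.2 * s - (a.1 * c - a.2 * s) =
   (b.1 - a.1) * c - (b.2 - a.2) * s by ring.
have -> : b.1 * s + b.2 * c - (a.1 * s + a.2 * c) =
   (b.1 - a.1) * s + (b.2 - a.2) * c by ring.
by rewrite rot_sq.
Qed.

Lemma nrm2_rot (c s : R) a : c ^+ 2 + s ^+ 2 = 1 ->
  nrm2 (rot c s a) = nrm2 a.
Proof. by move=> h; rewrite /nrm2 /rot /= rot_sq. Qed.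

Definition sc (c : R) (a : R * R) : R * R := (c * a.1, c * a.2).

Lemma nrm2_sc c a : 0 <= c -> nrm2 (sc c a) = c * nrm2 a.
Proof.
move=> hc; rewrite /nrm2 /sc /= !exprMn -mulrDr sqrtrM ?sqr_ge0 //.
by rewrite sqrtr_sqr ger0_norm.
Qed.

Lemma dist2_sc c a b : 0 <= c -> dist2 (sc c a) (sc c b) = c * dist2 a b.
Proof.
move=> hc; rewrite /dist2 /sc /= -!mulrBr.
by rewrite -(@nrm2_sc c (b.1 - a.1, b.2 - a.2) hc).
Qed.

End Helpers.
Arguments rot {R}. Arguments sc {R}. Arguments rot_sq {R}.

Theorem theorem4p2 (R : realType) (N : nat) (hN : (2 <= N)%N)
  (m : 'I_N -> R) (hm : forall i, 0 < m i) (gamma : R) (hgamma : 0 < gamma)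
  (lambda : R) (hlambda : 0 < lambda)
  (r : 'I_N -> R * R) (hr : config r)
  (hmin : forall r' : 'I_N -> R * R, config r' ->
     fpot m gamma r + lambda * gmom m r <= fpot m gamma r' + lambda * gmom m r')
  (phi : 'I_N -> R)
  (hphi : forall i, r i = (nrm2 (r i) * cos (phi i), nrm2 (r i) * sin (phi i))) :
  let omega := Num.sqrt (2 * lambda) in
  (forall t : R, 0 <= t ->
     fpot m gamma (traj r phi omega t) = fpot m gamma r /\
     gmom m (traj r phi omega t) = gmom m r) /\
  fpot m gamma r = Cmin m gamma / Num.sqrt (gmom m r).
Proof.
move=> omega; split.
  move=> t _.
  set th := omega * t.
  have h1 : cos th ^+ 2 + sin th ^+ 2 = 1 by rewrite cos2Dsin2.
  have ht : forall i, traj r phi omega t i = rot (cos th) (sin th) (r i).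
    move=> i; rewrite /traj /rot -/th.
    rewrite [in X in _ = (X.1 * _ - X.2 * _, _)]hphi.
    rewrite [in X in _ = (_, X.1 * _ + X.2 * _)]hphi /=.
    by rewrite cosD sinD; congr pair; ring.
  split.
    rewrite /fpot; apply: eq_bigr => i _; apply: eq_bigr => j _.
    by rewrite !ht dist2_rot.
  rewrite /gmom; apply: eq_bigr => i _.
  by rewrite ht nrm2_rot.
set g := gmom m r.
have fsc : forall (c : R) (r' : 'I_N -> R * R), 0 < c -> fpot m gamma (fun i => sc c (r' i)) = c^-1 * fpot m gamma r'.
  move=> c r' hc; rewrite /fpot mulr_sumr; apply: eq_bigr => i _.
  rewrite mulr_sumr; apply: eq_bigr => j _.
  by rewrite dist2_sc ?ltW // invfM; ring.
have gsc : forall (c : R) (r' : 'I_N -> R * R), 0 < c -> gmom m (fun i => sc c (r' i)) = c ^+ 2 * gmom m r'.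
  move=> c r' hc; rewrite /gmom mulr_sumr; apply: eq_bigr => i _.
  by rewrite nrm2_sc ?ltW //; ring.
have csc : forall (c : R) (r' : 'I_N -> R * R), 0 < c -> config r' -> config (fun i => sc c (r' i)).
  move=> c r' hc hr' i j hij; move: (hr' i j hij) => hne [e1 e2]; apply: hne.
  have hc0 : c != 0 by rewrite gt_eqF.
  case: (r' i) e1 e2 => a1 a2; case: (r' j) => b1 b2 /= e1 e2.
  by rewrite (mulfI hc0 e1) (mulfI hc0 e2).
have gpos : 0 < g.
  have g0 : 0 <= g.
    rewrite /g /gmom; apply: sumr_ge0 => i _.
    by rewrite mulr_ge0 ?sqr_ge0 // ltW.
  rewrite lt_neqAle g0 andbT; apply/negP => /eqP g0'.
  have z : forall i, r i = (0, 0).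
    move=> i.
    have : m i * nrm2 (r i) ^+ 2 == 0.
      move/esym/eqP: g0'; rewrite /g /gmom psumr_eq0.
        by move/allP/(_ i (mem_index_enum _)).
      by move=> k _; rewrite mulr_ge0 ?sqr_ge0 // ltW.
    rewrite mulf_eq0 gt_eqF //= sqrf_eq0 => /eqP n0.
    by rewrite hphi n0 !mul0r.
  have i01 : (Ordinal (leq_trans (isT : (0 < 2)%N) hN)) != (Ordinal hN) by [].
  by apply: (hr _ _ i01); rewrite !z.
set s := Num.sqrt g.
have spos : 0 < s by rewrite sqrtr_gt0.
have s2 : s ^+ 2 = g by rewrite sqr_sqrtr ?ltW.
set S := ([set fpot m gamma r' | r' in [set r' | config r' /\ gmom m r' = 1]])%classic.
have memS : S (s * fpot m gamma r).
  exists (fun i => sc s^-1 (r i)).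
    split; first by apply: csc; rewrite ?invr_gt0.
    rewrite gsc ?invr_gt0 // exprVn s2 -/g mulVf //; exact: lt0r_neq0.
  by rewrite fsc ?invr_gt0 // invrK.
have lbS : lbound S (s * fpot m gamma r).
  move=> y [r' [hc' hg']] <-.
  have := hmin _ (csc _ _ spos hc').
  rewrite gsc // hg' mulr1 s2 -/g lerD2r fsc // => hle.
  have si : 0 < s^-1 by rewrite invr_gt0.
  by rewrite -(ler_pM2l si) mulrA mulVf ?mul1r // lt0r_neq0.
have -> : Cmin m gamma = s * fpot m gamma r.
  rewrite /Cmin -/S; apply/eqP; rewrite eq_le; apply/andP; split.
    have := ge_inf (ex_intro _ _ lbS) memS. done.
  by apply: lb_le_inf => //; exists (s * fpot m gamma r).
by rewrite [s * _]mulrC mulfK // lt0r_neq0.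
Qed.
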